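(* For $0<q<1$ and every integer $k\ge1$, \[ \frac{q^k\prod_{n=1}^{k}(q^{2n}+q^{2k})}{\prod_{n=0}^{k}(1-q^{2n+2k})} = -\,\frac{q^k\,(-q^2;q^2)_k}{(q^{2k}-1)\,(q^2;q^2)_k}\; {}_3\phi_2\!\left(\begin{matrix}-q^{2k+2},\,q^{2k},\,q^{-2k}\\ -q^2,\,q^{2k+2}\end{matrix};q^2,\,q^2\right). \]
   Context: $(a;q)_n=\prod_{i=0}^{n-1}(1-aq^i)$ with $(a;q)_0=1$. Here ${}_3\phi_2\!\left(\begin{smallmatrix}a_1,a_2,a_3\\ b_1,b_2\end{smallmatrix};p,z\right)=\sum_{i\ge0}\frac{(a_1;p)_i(a_2;p)_i(a_3;p)_i}{(b_1;p)_i(b_2;p)_i(p;p)_i}z^i$; with $a_3=q^{-2k}$ and $p=q^2$ the sum terminates at $i=k$. *)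

(* Defs.v *)
From mathcomp Require Import all_boot all_order all_algebra.
Set Implicit Arguments. Unset Strict Implicit. Unset Printing Implicit Defensive.
Import Order.TTheory GRing.Theory Num.Theory.
Local Open Scope ring_scope.

Definition qpoch {R : fieldType} (a p : R) (n : nat) : R :=
  \prod_(i < n) (1 - a * p ^+ i).

(* Partial sum of the basic hypergeometric series 3phi2, summed over 0 <= i <= N.
   When a3 = p^{-k} (here p = q^2, a3 = q^{-2k}) the series terminates at i = k,
   so with N = k this equals the full series. *)
Definition phi32_upto {R : fieldType} (a1 a2 a3 b1 b2 p z : R) (N : nat) : R :=
  \sum_(i < N.+1)
    (qpoch a1 p i * qpoch a2 p i * qpoch a3 p i) /
    (qpoch b1 p i * qpoch b2 p i * qpoch p p i) * z ^+ i.

(* Main.v *)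
Require Import Defs.
From mathcomp Require Import all_boot all_order all_algebra qpoly ring lra zify.
Import Order.TTheory GRing.Theory Num.Theory.
Local Open Scope ring_scope.

Lemma qpochSl (R : fieldType) (a p : R) i :
  qpoch a p i.+1 = (1 - a) * qpoch (a * p) p i.
Proof.
rewrite /qpoch big_ord_recl /= expr0 mulr1; congr (_ * _).
by apply: eq_bigr => j _; rewrite /= exprS mulrA.
Qed.

Lemma qpochSr (R : fieldType) (a p : R) i :
  qpoch a p i.+1 = qpoch a p i * (1 - a * p ^+ i).
Proof. by rewrite /qpoch big_ord_recr. Qed.

Lemma prod_const_ord (R : comRingType) (x : R) n :
  \prod_(j < n) x = x ^+ n.
Proof. by rewrite prodr_const card_ord. Qed.
Arguments prod_const_ord {R}.

Lemma c1 (R : fieldType) (p : R) i :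
  \prod_(j < i) (p ^+ i - p ^+ j) = (-1) ^+ i * (\prod_(j < i) p ^+ j) * qpoch p p i.
Proof.
elim: i => [|i IH]; first by rewrite !big_ord0 /qpoch big_ord0 expr0 !mulr1.
rewrite big_ord_recl /= expr0.
have -> : \prod_(j < i) (p ^+ i.+1 - p ^+ (bump 0 j)) =
   p ^+ i * \prod_(j < i) (p ^+ i - p ^+ j).
  rewrite -[X in X * _](prod_const_ord p i) -big_split /=; apply: eq_bigr => j _.
  by rewrite /bump /= add1n !exprS; ring.
rewrite IH big_ord_recr qpochSr /= !exprS; ring.
Qed.

Lemma c2 (R : fieldType) (p : R) i n :
  \prod_(m < n) (p ^+ i - p ^+ (m + i.+1)) = (p ^+ i) ^+ n * qpoch p p n.
Proof.
rewrite -[X in X * _](prod_const_ord (p ^+ i) n) /qpoch -big_split /=; apply: eq_bigr => m _.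
rewrite exprD exprS; ring.
Qed.

Lemma c3 (R : fieldType) (p : R) i r :
  \prod_(j < i) (p ^+ (i + r) - p ^+ j) * qpoch p p r * p ^+ i
   * ((-1) ^+ i * \prod_(j < i) p ^+ j) * (p ^+ i) ^+ r
  = (p ^+ (i + r)) ^+ i * qpoch p p (i + r).
Proof.
elim: i r => [|i IH] r.
  by rewrite !big_ord0 add0n !expr0 expr1n; ring.
rewrite addSnnS.
set K := (i + r.+1)%N.
have eK : p ^+ K = p ^+ i * (p * p ^+ r) by rewrite -exprS -exprD.
transitivity ((\prod_(j < i) (p ^+ (i + r.+1) - p ^+ j) * qpoch p p r.+1 * p ^+ i
   * ((-1) ^+ i * \prod_(j < i) p ^+ j) * (p ^+ i) ^+ r.+1) * p ^+ K).
  rewrite big_ord_recr /= [in RHS]qpochSr [\prod_(j < i.+1) p ^+ j]big_ord_recr /=.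
  rewrite -/K eK.
  rewrite ?exprS exprMn; ring.
by rewrite /K IH -/K [in RHS]exprS; ring.
Qed.

Lemma La (R : fieldType) (p : R) k i :
  qpoch (- p ^+ k.+1) p i * qpoch (- p) p k
  = (\prod_(m < k) (p ^+ m.+1 * p ^+ i + 1)) * qpoch (- p) p i.
Proof.
pose F n := \prod_(m < n) (1 + p ^+ m.+1).
have eF n : qpoch (- p) p n = F n.
  by apply: eq_bigr => m _; rewrite mulNr opprK exprS.
have sF a b : F (a + b)%N = F a * \prod_(m < b) (1 + p ^+ (a + m).+1).
  by rewrite /F big_split_ord.
have -> : qpoch (- p ^+ k.+1) p i = \prod_(m < i) (1 + p ^+ (k + m).+1).
  by apply: eq_bigr => m _; rewrite mulNr opprK -exprD addSn.
have -> : \prod_(m < k) (p ^+ m.+1 * p ^+ i + 1) = \prod_(m < k) (1 + p ^+ (i + m).+1).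
  by apply: eq_bigr => m _; rewrite -exprD addSn addnC addrC.
by rewrite !eF mulrC -sF addnC sF mulrC.
Qed.

Lemma Lb (R : fieldType) (p : R) k i :
  (1 - p ^+ k) * qpoch (p ^+ k.+1) p i = qpoch (p ^+ k) p i * (1 - p ^+ k * p ^+ i).
Proof. by rewrite -qpochSr qpochSl exprSr. Qed.

Lemma Dsplit (R : comRingType) (f : nat -> R) k (i : 'I_k.+1) :
  \prod_(j < k.+1 | j != i) f j = \prod_(j < i) f j * \prod_(m < k - i) f (m + i.+1)%N.
Proof.
rewrite big_mkcond /=.
pose G (j : nat) := if j != (i : nat) then f j else 1.
rewrite (eq_bigr (fun j : 'I_k.+1 => G j)) //.
rewrite -(big_mkord (fun _ => true) G) (big_cat_nat _ (n := i)) //=; last first.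
  exact: ltnW.
rewrite [X in _ * X]big_ltn // {2}/G eqxx mul1r; congr (_ * _).
  rewrite big_mkord; apply: eq_bigr => j _.
  by rewrite /G (ltn_eqF (ltn_ord j)).
rewrite -{1}[i.+1]add0n big_addn big_mkord subSS; apply: eq_bigr => m _.
by rewrite /G; have -> : ((m + i.+1)%N != i) by lia.
Qed.

Lemma ec (R : fieldType) (p : R) k (i : 'I_k.+1) : p != 0 ->
  qpoch (p ^+ k)^-1 p i * p ^+ i * \prod_(j < k.+1 | j != i) (p ^+ i - p ^+ j)
  = qpoch p p k * qpoch p p i.
Proof.
move=> p0.
have pk0 : p ^+ k != 0 by rewrite expf_neq0.
rewrite (Dsplit _ (fun j => p ^+ i - p ^+ j)) c1 c2.
have -> : qpoch (p ^+ k)^-1 p i = ((p ^+ k)^-1) ^+ i * \prod_(j < i) (p ^+ k - p ^+ j).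
  rewrite -[X in X * _](prod_const_ord ((p ^+ k)^-1) i) /qpoch -big_split; apply: eq_bigr => j _ /=; field.
  exact: pk0.
have hk : k = (i + (k - i))%N by rewrite subnKC // -ltnS.
have := c3 _ p i (k - i); rewrite -hk => H.
set r := (k - i)%N in H *.
set A := \prod_(j < i) (p ^+ k - p ^+ j) in H *.
set E := \prod_(j < i) p ^+ j in H *.
transitivity ((A * qpoch p p r * p ^+ i * ((-1) ^+ i * E) * (p ^+ i) ^+ r)
   * ((p ^+ k)^-1) ^+ i * qpoch p p i); first by ring.
have e : (p ^+ k) ^+ i * ((p ^+ k)^-1) ^+ i = 1 by rewrite -exprMn mulfV // expr1n.
rewrite H; transitivity (((p ^+ k) ^+ i * ((p ^+ k)^-1) ^+ i) * (qpoch p p k * qpoch p p i)).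
  by ring.
by rewrite e mul1r.
Qed.

Lemma sizeP (R : fieldType) (p : R) n :
  leq (size (\prod_(m < n) ((p ^+ m.+1)%:P * 'X + 1) : {poly R})%R) n.+1.
Proof.
elim: n => [|n IH]; first by rewrite big_ord0 size_poly1.
rewrite big_ord_recr /=.
apply: (leq_trans (size_mul_leq _ _)).
have h2 : leq (size ((p ^+ n.+1)%:P * 'X + 1 : {poly R})%R) 2.
  rewrite -polyC1 size_MXaddC; case: ifP => // _.
  by rewrite ltnS size_polyC leq_b1.
move: IH h2; set a := size _; set b := size _; lia.
Qed.

Lemma lag (R : fieldType) (p z : R) k : injective (fun j : nat => p ^+ j) ->
  \prod_(m < k) (p ^+ m.+1 * z + 1) =
  \sum_(i < k.+1) (\prod_(m < k) (p ^+ m.+1 * p ^+ i + 1)) *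
     ((\prod_(j < k.+1 | j != i) (p ^+ i - p ^+ j))^-1 *
      \prod_(j < k.+1 | j != i) (z - p ^+ j)).
Proof.
move=> inj.
set Pp := \prod_(m < k) ((p ^+ m.+1)%:P * 'X + 1 : {poly R}).
have hP w : Pp.[w] = \prod_(m < k) (p ^+ m.+1 * w + 1).
  by rewrite horner_prod; apply: eq_bigr => m _; rewrite !hornerE.
have := lagrange_gen (ltn0Sn k) inj (sizeP _ p k); rewrite -/Pp.
move/(congr1 (fun q => q.[z])); rewrite hP horner_sum => ->.
apply: eq_bigr => i _.
rewrite hornerM hornerC lagrangeE //= hornerM hornerC hP !horner_prod.
by congr (_ * (_^-1 * _)); apply: eq_bigr => j _; rewrite hornerXsubC.
Qed.

Lemma core (R : realFieldType) (p c : R) (k : nat) : 0 < p -> p < 1 -> (1 <= k)%N ->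
  c * (\prod_(1 <= n < k.+1) (p ^+ n + p ^+ k)) / (\prod_(0 <= n < k.+1) (1 - p ^+ (n + k)))
  = - (c * qpoch (- p) p k) / ((p ^+ k - 1) * qpoch p p k)
    * phi32_upto (- p ^+ k.+1) (p ^+ k) (p ^+ k)^-1 (- p) (p ^+ k.+1) p p k.
Proof.
move=> p0 p1 k1.
have pn0 : p != 0 by rewrite gt_eqF.
have pgt n : 0 < p ^+ n by rewrite exprn_gt0.
have plt n : (0 < n)%N -> p ^+ n < 1.
  by move=> h; rewrite exprn_ilt1 ?ltW // -lt0n.
have ne1 n : (0 < n)%N -> 1 - p ^+ n != 0.
  by move=> h; rewrite subr_eq0 eq_sym (lt_eqF (plt n h)).
have inj : injective (fun j : nat => p ^+ j).
  by apply: ieexprIn => //; rewrite (lt_eqF p1).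
set x := p ^+ k.
have x0 : x != 0 by rewrite expf_neq0.
have Qp n : qpoch p p n != 0.
  by apply/prodf_neq0 => j _; rewrite -exprS ne1.
have Qm n : qpoch (- p) p n != 0.
  apply/prodf_neq0 => j _; rewrite mulNr opprK -exprS; apply: lt0r_neq0.
  by rewrite addr_gt0 ?ltr01.
have Qb n : qpoch (p ^+ k.+1) p n != 0.
  by apply/prodf_neq0 => j _; rewrite -exprD ne1.
have x1 : x - 1 != 0 by rewrite subr_eq0 (lt_eqF (plt k k1)).
have xp j : 1 - x * p ^+ j != 0 by rewrite -exprD ne1 // addn_gt0 k1.
have zj j : x^-1 - p ^+ j != 0.
  have -> : x^-1 - p ^+ j = (1 - x * p ^+ j) / x by field.
  by rewrite mulf_neq0 ?invr_eq0.
have eN : \prod_(1 <= n < k.+1) (p ^+ n + x) = x ^+ k * \prod_(m < k) (p ^+ m.+1 * x^-1 + 1).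
  rewrite big_add1 /= big_mkord -[X in _ = X * _](prod_const_ord x k) -big_split /=.
  by apply: eq_bigr => m _; field.
have eD : \prod_(0 <= n < k.+1) (1 - p ^+ (n + k)) = x ^+ k.+1 * \prod_(j < k.+1) (x^-1 - p ^+ j).
  rewrite big_mkord -[X in _ = X * _](prod_const_ord x k.+1) -big_split /=.
  by apply: eq_bigr => j _; rewrite exprD -/x; field.
rewrite eN eD (lag _ p x^-1 k inj) /phi32_upto.
rewrite mulr_sumr mulr_sumr mulr_suml mulr_sumr; apply: eq_bigr => i _.
have eM : \prod_(j < k.+1) (x^-1 - p ^+ j) = (x^-1 - p ^+ i) * \prod_(j < k.+1 | j != i) (x^-1 - p ^+ j).
  by rewrite (bigD1 i).
have N0 : \prod_(j < k.+1 | j != i) (x^-1 - p ^+ j) != 0.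
  by apply/prodf_neq0 => j _; apply: zj.
have D0 : \prod_(j < k.+1 | j != i) (p ^+ i - p ^+ j) != 0.
  apply/prodf_neq0 => j ji; rewrite subr_eq0 (inj_eq inj).
  by rewrite eq_sym.
have ea : qpoch (- p ^+ k.+1) p i =
    (\prod_(m < k) (p ^+ m.+1 * p ^+ i + 1)) * qpoch (- p) p i / qpoch (- p) p k.
  by apply: (mulIf (Qm k)); rewrite La divfK.
have eb : qpoch x p i = (1 - x) * qpoch (p ^+ k.+1) p i / (1 - x * p ^+ i).
  by rewrite Lb mulfK.
have ec' : qpoch x^-1 p i = qpoch p p k * qpoch p p i / (p ^+ i * \prod_(j < k.+1 | j != i) (p ^+ i - p ^+ j)).
  by rewrite -ec // -(mulrA (qpoch _ _ _)) mulfK // mulf_neq0 // expf_neq0.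
rewrite eM ea eb ec'.
move: (zj i) (xp i) N0 D0 (Qm i) (Qm k) (Qp i) (Qp k) (Qb i) (pgt i).
set N := \prod_(j < k.+1 | j != i) _.
set D := \prod_(j < k.+1 | j != i) _.
set P := \prod_(m < k) _.
set A1 := qpoch _ _ _; set A2 := qpoch _ _ _; set A3 := qpoch _ _ _;
set A4 := qpoch _ _ _; set A5 := qpoch _ _ _.
set y := p ^+ i. clearbody x.
move=> h1 h2 h3 h4 h5 h6 h7 h8 h9 h10; rewrite exprS.
field.
rewrite h2 h3 h4 h5 h6 h7 h8 h9 x1 x0 /=.
by apply/andP; split; [apply: lt0r_neq0 | apply: expf_neq0].
Qed.

Theorem mainTheorem2 (R : realFieldType) (q : R) (k : nat) :
  0 < q -> q < 1 -> (1 <= k)%N ->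
  q ^+ k * (\prod_(1 <= n < k.+1) (q ^+ (2 * n) + q ^+ (2 * k)))
    / (\prod_(0 <= n < k.+1) (1 - q ^+ (2 * n + 2 * k)))
  = - (q ^+ k * qpoch (- q ^+ 2) (q ^+ 2) k)
      / ((q ^+ (2 * k) - 1) * qpoch (q ^+ 2) (q ^+ 2) k)
    * phi32_upto (- q ^+ (2 * k + 2)) (q ^+ (2 * k)) (q ^+ (2 * k))^-1
                 (- q ^+ 2) (q ^+ (2 * k + 2)) (q ^+ 2) (q ^+ 2) k.
Proof.
move=> q0 q1 k1.
have p0 : 0 < q ^+ 2 by rewrite exprn_gt0.
have p1 : q ^+ 2 < 1 by rewrite exprn_ilt1 ?ltW.
have e1 n : q ^+ (2 * n) = (q ^+ 2) ^+ n by rewrite exprM.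
have e2 : q ^+ (2 * k + 2) = (q ^+ 2) ^+ k.+1 by rewrite -e1 mulnS addnC.
rewrite (eq_bigr (fun n => (q ^+ 2) ^+ n + (q ^+ 2) ^+ k)); last by move=> n _; rewrite !e1.
rewrite [X in _ / X](eq_bigr (fun n => 1 - (q ^+ 2) ^+ (n + k))); last first.
  by move=> n _; rewrite -mulnDr e1.
rewrite e2 !e1.
exact: core.
Qed.
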